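(* Let $X$ be an alphabet, $L\subseteq X^*$, and let $I=Y_0^*\{x_1,\varepsilon\}Y_1^*\cdots\{x_n,\varepsilon\}Y_n^*$ with $Y_0,\dots,Y_n\subseteq X$ and $x_1,\dots,x_n\in X$. Let $m\ge N(L)+1$. Then the following are equivalent: (1) $I\subseteq \downarrow L$; (2) for every $m'\ge N(L)+1$, the word $w_{Y_0}^{m'}x_1w_{Y_1}^{m'}\cdots x_nw_{Y_n}^{m'}$ belongs to $\downarrow L$; (3) the word $w_{Y_0}^{m}x_1w_{Y_1}^{m}\cdots x_nw_{Y_n}^{m}$ belongs to $\downarrow L$.
   Context: $u\preceq v$ denotes the subword ordering on $X^*$ and $\downarrow L=\{u\mid\exists v\in L: u\preceq v\}$. An ideal expression is a finite product of factors, each of the form $Y^*$ with $Y\subseteq X$ (possibly empty, $\emptyset^*=\{\varepsilon\}$) or $\{x,\varepsilon\}$ with $x\in X$; the set it denotes is an ideal, and the length of the expression is its number of factors. Every downward closed language is a finite union of ideals. $N(L)$ denotes the least number $N$ such that $\downarrow L$ is a finite union of ideals each given by an expression of length at most $N$. For $Y\subseteq X$, $w_Y$ denotes a fixed word containing every letter of $Y$ exactly once and no other letters ($w_\emptyset=\varepsilon$). *)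

(* Defs.v *)
From Stdlib Require List.
From mathcomp Require Import all_boot.
Set Implicit Arguments. Unset Strict Implicit. Unset Printing Implicit Defensive.

Section Words.
Variable X : finType.

(* subword ordering u ≼ v is mathcomp's [subseq u v] (scattered subsequence) *)
Definition downclosure (L : seq X -> Prop) (u : seq X) : Prop :=
  exists v, L v /\ subseq u v.

Inductive factor : Type :=
| FStar : {set X} -> factor
| FOpt : X -> factor.

Definition factor_lang (f : factor) (w : seq X) : Prop :=
  match f with
  | FStar Y => all (fun a => a \in Y) w
  | FOpt x => w = [::] \/ w = [:: x]
  end.

(* an ideal expression is a list of factors; its length is [size e] *)
Fixpoint expr_lang (e : seq factor) (w : seq X) : Prop :=
  match e with
  | [::] => w = [::]
  | f :: e' => exists w1 w2, w = w1 ++ w2 /\ factor_lang f w1 /\ expr_lang e' w2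
  end.

Definition union_of_ideals_bounded (L : seq X -> Prop) (N : nat) : Prop :=
  exists es : seq (seq factor),
    (forall e, List.In e es -> size e <= N) /\
    (forall w, downclosure L w <-> exists e, List.In e es /\ expr_lang e w).

Definition is_NL (L : seq X -> Prop) (N : nat) : Prop :=
  union_of_ideals_bounded L N /\
  (forall N', union_of_ideals_bounded L N' -> N <= N').

Definition letter_words (wY : {set X} -> seq X) : Prop :=
  forall Y, uniq (wY Y) /\ wY Y =i Y.

Definition wpow (m : nat) (w : seq X) : seq X := flatten (nseq m w).

(* I = Y0^* {x1,eps} Y1^* ... {xn,eps} Yn^*, with ps = [(x1,Y1);...;(xn,Yn)] *)
Definition ideal_expr (Y0 : {set X}) (ps : seq (X * {set X})) : seq factor :=
  FStar Y0 :: flatten [seq [:: FOpt p.1; FStar p.2] | p <- ps].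

Definition ideal_word (wY : {set X} -> seq X) (m : nat)
    (Y0 : {set X}) (ps : seq (X * {set X})) : seq X :=
  wpow m (wY Y0) ++ flatten [seq p.1 :: wpow m (wY p.2) | p <- ps].

End Words.

(* Main.v *)
Require Import Defs.
From mathcomp Require Import all_boot.
Set Implicit Arguments. Unset Strict Implicit. Unset Printing Implicit Defensive.

Section Proof.
Variable X : finType.

Lemma cat_eq_inv (T : Type) (a b c d : seq T) : a ++ b = c ++ d ->
  exists r, (a = c ++ r /\ d = r ++ b) \/ (c = a ++ r /\ b = r ++ d).
Proof.
elim: a c => [|x a IH] [|y c] /=.
- move=> ->; exists [::]; by left.
- move=> ->; exists (y :: c); by right.
- move=> <-; exists (x :: a); by left.
- case=> -> /IH [r [[-> ->]|[-> ->]]]; exists r; [left|right]; by [].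
Qed.

Fixpoint rich (Y : {set X}) (c : nat) (v : seq X) {struct c} : Prop :=
  match c with
  | 0 => True
  | c'.+1 => exists v1 v2, v = v1 ++ v2 /\ {subset Y <= v1} /\ rich Y c' v2
  end.

Lemma rich_pre (Y : {set X}) c v s : rich Y c v -> rich Y c (s ++ v).
Proof.
case: c => //= c [v1 [v2 [-> [H1 H2]]]]; exists (s ++ v1), v2.
rewrite catA; split => //; split => // y Hy; by rewrite mem_cat H1 ?orbT.
Qed.

Lemma rich_mono (Y : {set X}) c c' v : c' <= c -> rich Y c v -> rich Y c' v.
Proof.
elim: c c' v => [|c IH] [|c'] v //= Hle [v1 [v2 [-> [H1 H2]]]].
exists v1, v2; split => //; split => //; exact: IH Hle H2.
Qed.

Lemma rich_split (Y : {set X}) c w1 v' : rich Y c.+1 (w1 ++ v') ->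
  {subset Y <= w1} \/ rich Y c v'.
Proof.
move=> /= [v1 [v2 [E [H1 H2]]]].
have [r [[E1 _]|[E1 ->]]] := cat_eq_inv E; subst.
- left => y Hy; by rewrite mem_cat H1.
- right; exact: rich_pre.
Qed.

Lemma rich_nilY (Y : {set X}) c v : {subset Y <= [::]} -> rich Y c v.
Proof.
move=> H; elim: c v => //= c IH v; exists [::], v; split => //; split => //.
Qed.

Lemma rich_cons (Y : {set X}) c z v' : rich Y c.+1 (z :: v') -> rich Y c v'.
Proof.
move=> /= [[|a v1] [v2 [E [H1 H2]]]].
- exact: rich_nilY.
- case: E => _ ->; exact: rich_pre.
Qed.

Lemma rich_nil (Y : {set X}) c : rich Y c.+1 [::] -> {subset Y <= [::]}.
Proof. by move=> /= [[|a v1] [v2 [E [H1 H2]]]]. Qed.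

Lemma rich_all (Y : {set X}) c v : rich Y c.+1 v -> {subset Y <= v}.
Proof. move=> /= [v1 [v2 [-> [H1 _]]]] y Hy; by rewrite mem_cat H1. Qed.

Definition good c (p : factor X * seq X) : Prop :=
  match p.1 with
  | FStar Y => all (fun a => a \in Y) p.2 /\ rich Y c p.2
  | FOpt x => p.2 = [:: x]
  end.

Fixpoint goodall c (ps : seq (factor X * seq X)) : Prop :=
  match ps with [::] => True | p :: ps' => good c p /\ goodall c ps' end.

Lemma good_mono c c' ps : c' <= c -> goodall c ps -> goodall c' ps.
Proof.
move=> Hle; elim: ps => //= [[[Y|x] v] ps IH] [Hg Hs]; split; try exact: IH.
- case: Hg => /= H1 H2; split => //; exact: rich_mono Hle H2.
- exact Hg.
Qed.

Lemma good_lang c ps : goodall c ps -> expr_lang (map fst ps) (flatten (map snd ps)).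
Proof.
elim: ps => //= [[f v] ps IH] [Hg Hs]; exists v, (flatten (map snd ps)).
split => //; split; last exact: IH.
case: f Hg => [Y|x]; rewrite /good /=; [by case|move=> ->; by right].
Qed.

Lemma lang_star_pre (Z : {set X}) (e : seq (factor X)) s u : all (fun a => a \in Z) s ->
  expr_lang (FStar Z :: e) u -> expr_lang (FStar Z :: e) (s ++ u).
Proof.
move=> Hs [w1 [w2 [-> [H1 H2]]]]; exists (s ++ w1), w2.
rewrite catA; split => //; split => //=; by rewrite all_cat Hs.
Qed.

Lemma lang_weak (f : factor X) e u : expr_lang e u -> expr_lang (f :: e) u.
Proof.
move=> H; exists [::], u; split => //; split => //; case: f => //= x; by left.
Qed.

Lemma lang_suffix (e : seq (factor X)) s t : expr_lang e (s ++ t) -> expr_lang e t.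
Proof.
elim: e s t => [|f e IH] s t /=.
- by case: s => [|? ?] //=.
- move=> [w1 [w2 [E [H1 H2]]]].
  have [r [[E1 E2]|[E1 E2]]] := cat_eq_inv E.
  + apply: lang_weak; apply: (IH r); by rewrite -E2.
  + exists r, w2; split => //; split => //.
    subst w1 t; case: f H1 => /= [Y|x].
    * by rewrite all_cat => /andP [].
    * clear E; case: s => [|a s] /=; first by [].
      case => // [[_ E3]]; left; by case: s r E3 => [|? ?] [|? ?].
Qed.

Lemma key (e2 : seq (factor X)) : forall c ps, size e2 < c -> goodall c ps ->
  expr_lang e2 (flatten (map snd ps)) ->
  forall u, expr_lang (map fst ps) u -> expr_lang e2 u.
Proof.
elim: e2 => [|f e2 IHe] [//|c] ps Hc.
- elim: ps => [|[g v] ps IHp] /=; first by [].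
  move=> [Hg Hs] Hw u [u1 [u2 [-> [Hu1 Hu2]]]].
  case: v Hg Hw => [|a v] //= Hg Hr.
  have -> := IHp Hs Hr u2 Hu2.
  case: g Hg Hu1 => [Y [_ /rich_nil HY]|x] //= Hu1.
  case: u1 Hu1 => // a u1 /= /andP [Ha _]; by have := HY a Ha.
- rewrite /= ltnS in Hc.
  have Hc1 : size e2 < c.+1 by exact: leqW.
  elim: ps => [|[g v] ps IHp] /=; first by move=> _ Hw u ->.
  move=> [Hg Hs] [w1 [w2 [Ew [Hf Hw2]]]] u [u1 [u2 [-> [Hu1 Hu2]]]].
  have Hgood : goodall c.+1 ((g, v) :: ps) by split.
  have Hu : expr_lang (map fst ((g, v) :: ps)) (u1 ++ u2) by exists u1, u2.
  case: f IHp Hf Hw2 => [Z|z] IHp Hf Hw2.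
  + case: g Hg Hgood Hu Hu1 => [Y|x] /= Hg Hgood Hu Hu1.
    * case: Hg => HvY HvR.
      have [r [[Ev Ew2]|[Ew1 Efl]]] := cat_eq_inv Ew.
      -- subst v; have [HY|Hr] := rich_split HvR.
         ++ have HYZ : {subset Y <= Z}.
              move=> y /HY Hy; exact: (allP Hf).
            apply: lang_star_pre.
              apply/allP => y Hy; apply: HYZ; exact: (allP Hu1).
            apply: IHp => //; apply: (lang_weak (FStar Z)); apply: (lang_suffix (s := r)).
            by rewrite -Ew2.
         ++ apply: (lang_weak (FStar Z)); apply: (IHe c ((FStar Y, r) :: ps)) => //.
            ** split; last exact: good_mono (leqnSn c) Hs.
               rewrite /good /=; split => //.
               by move: HvY; rewrite all_cat => /andP [].
            ** by rewrite /= -Ew2.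
      -- have HYZ : {subset Y <= Z}.
           move=> y /(rich_all HvR) Hy; apply: (allP Hf); by rewrite Ew1 mem_cat Hy.
         apply: lang_star_pre.
           apply/allP => y Hy; apply: HYZ; exact: (allP Hu1).
         apply: IHp => //; exists r, w2; split => //; split => //.
         by move: Hf; rewrite /= Ew1 all_cat => /andP [].
    * rewrite /good /= in Hg; subst v; case: w1 Ew Hf => [|b w1] /= Ew Hf.
      -- apply: (lang_weak (FStar Z)); apply: (IHe c.+1 ((FOpt x, [:: x]) :: ps)) => //.
         by move: Hw2; rewrite -Ew.
      -- case: Ew => Eb Efl; subst b.
         move: Hf => /andP [Hx Hf].
         apply: lang_star_pre.
           by case: Hu1 => ->; rewrite //= Hx.
         apply: IHp => //; exists w1, w2; split => //.
  + case: Hf => Ew1; subst w1.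
    * apply: (lang_weak (FOpt z)); apply: (IHe c.+1 ((g, v) :: ps)) => //.
      by move: Hw2; rewrite /= in Ew; rewrite -Ew.
    * case: g Hg Hgood Hu Hu1 => [Y|x] /= Hg Hgood Hu Hu1.
      -- case: Hg => HvY HvR; clear Hgood Hu; case: v Ew HvY HvR => [|a v'] /= Ew HvY HvR.
         ++ have HY := rich_nil HvR.
            have -> : u1 = [::].
              case: u1 Hu1 => // a u1 /= /andP [Ha _]; by have := HY a Ha.
            apply: IHp => //; exists [:: z], w2; split => //; split => //; by right.
         ++ case: Ew => _ Ew.
            apply: (lang_weak (FOpt z)); apply: (IHe c ((FStar Y, v') :: ps)) => //.
            ** split; last exact: good_mono (leqnSn c) Hs.
               rewrite /good /=; split; first by case/andP: HvY.
               exact: rich_cons HvR.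
            ** by move: Hw2; rewrite -Ew.
            ** by exists u1, u2.
      -- rewrite /good /= in Hg; subst v; case: Ew => <- Ew.
         exists u1, u2; split => //; split => //.
         apply: (IHe c.+1 ps) => //; by rewrite Ew.
Qed.

Definition qs (wY : {set X} -> seq X) m Y0 (ps : seq (X * {set X})) :=
  (FStar Y0, wpow m (wY Y0)) ::
  flatten [seq [:: (FOpt p.1, [:: p.1]); (FStar p.2, wpow m (wY p.2))] | p <- ps].

Lemma qs_fst wY m Y0 ps : map fst (qs wY m Y0 ps) = ideal_expr Y0 ps.
Proof. rewrite /ideal_expr /qs /=; congr cons; by elim: ps => //= p ps ->. Qed.

Lemma qs_snd wY m Y0 ps : flatten (map snd (qs wY m Y0 ps)) = ideal_word wY m Y0 ps.
Proof. rewrite /ideal_word /qs /=; congr cat; by elim: ps => //= p ps ->. Qed.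

Lemma wpow_good wY (hw : letter_words wY) (Y : {set X}) m : good m (FStar Y, wpow m (wY Y)).
Proof.
rewrite /good /=; split.
- rewrite /wpow; elim: m => //= m IH; rewrite all_cat IH andbT.
  apply/allP => y; by rewrite (hw Y).2.
- elim: m => //= m IH; exists (wY Y), (wpow m (wY Y)); split => //; split => //.
  move=> y Hy; by rewrite (hw Y).2.
Qed.

Lemma qs_good wY (hw : letter_words wY) m Y0 ps : goodall m (qs wY m Y0 ps).
Proof.
rewrite /qs /=; split; first exact: wpow_good.
elim: ps => //= p ps IH; split => //; split => //; exact: wpow_good.
Qed.

End Proof.

Theorem mainTheorem2 (X : finType) (L : seq X -> Prop)
    (wY : {set X} -> seq X) (hw : letter_words wY)
    (Y0 : {set X}) (ps : seq (X * {set X})) (NL : nat) (hN : is_NL L NL)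
    (m : nat) (hm : NL + 1 <= m) :
  [/\ ((forall u, expr_lang (ideal_expr Y0 ps) u -> downclosure L u) <->
       (forall m', NL + 1 <= m' -> downclosure L (ideal_word wY m' Y0 ps))),
      ((forall m', NL + 1 <= m' -> downclosure L (ideal_word wY m' Y0 ps)) <->
       downclosure L (ideal_word wY m Y0 ps)) &
      ((forall u, expr_lang (ideal_expr Y0 ps) u -> downclosure L u) <->
       downclosure L (ideal_word wY m Y0 ps))].
Proof.
have H12 : (forall u, expr_lang (ideal_expr Y0 ps) u -> downclosure L u) ->
       (forall m', NL + 1 <= m' -> downclosure L (ideal_word wY m' Y0 ps)).
  move=> H m' _; apply: H; rewrite -(qs_fst wY m') -qs_snd.
  exact: good_lang (qs_good hw m' Y0 ps).
have H23 : (forall m', NL + 1 <= m' -> downclosure L (ideal_word wY m' Y0 ps)) ->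
       downclosure L (ideal_word wY m Y0 ps) by move=> H; exact: H.
have H31 : downclosure L (ideal_word wY m Y0 ps) ->
       (forall u, expr_lang (ideal_expr Y0 ps) u -> downclosure L u).
  move=> H u Hu; case: hN => [[es [Hsz Heq]] _].
  have [e [He Hew]] := (Heq _).1 H.
  apply: (Heq u).2; exists e; split => //.
  apply: (key (c := m) (ps := qs wY m Y0 ps)).
  - apply: leq_trans hm; by rewrite addn1 ltnS Hsz.
  - exact: qs_good.
  - by rewrite qs_snd.
  - by rewrite qs_fst.
split; split; auto.
Qed.
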